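(* For any integer $m\ge1$, the number of graphs on the vertex set $\{1,\dots,n\}$ that are intersection graphs of $n$ numbered axis-parallel boxes in $\mathbb{R}^m$ equals $n^{(2m+o(1))n}$.
   Context: An axis-parallel box in $\mathbb{R}^m$ is a set $\prod_{i=1}^m[\alpha_i,\beta_i]$ with $\alpha_i<\beta_i$. The intersection graph of objects $D_1,\dots,D_n$ is the graph on $\{1,\dots,n\}$ in which $i\neq j$ are adjacent iff $D_i\cap D_j\neq\emptyset$. ''Equals $n^{(c+o(1))n}$'' means equals $n^{(c+\varepsilon(n))n}$ for some function $\varepsilon(n)\to0$ as $n\to\infty$ (for fixed $m$). *)

(* Defs.v *)
From mathcomp Require Import all_boot.
From Stdlib Require Import Reals ClassicalEpsilon.
Unset Printing Implicit Defensive.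

Definition boxes_intersect (m : nat) (a1 b1 a2 b2 : 'I_m -> R) : Prop :=
  exists x : 'I_m -> R, forall k : 'I_m,
    (a1 k <= x k <= b1 k)%R /\ (a2 k <= x k <= b2 k)%R.

(* A graph on vertex set 'I_n (= {1..n} shifted to {0..n-1}) is given by its
   set of ordered adjacent pairs E. *)
Definition is_box_graph (m n : nat) (E : {set 'I_n * 'I_n}) : Prop :=
  exists a b : 'I_n -> 'I_m -> R,
    (forall i k, (a i k < b i k)%R) /\
    (forall i j : 'I_n,
        (i, j) \in E <-> (i <> j /\ boxes_intersect m (a i) (b i) (a j) (b j))).

Definition is_box_graph_b (m n : nat) (E : {set 'I_n * 'I_n}) : bool :=
  if excluded_middle_informative (is_box_graph m n E) then true else false.

Definition num_box_graphs (m n : nat) : nat :=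
  #|[set E : {set 'I_n * 'I_n} | is_box_graph_b m n E]|.

(* Main.v *)
Require Import Defs.
From mathcomp Require Import all_boot zify.
From Stdlib Require Import Reals Lra ClassicalEpsilon.

Lemma box_int_iff m (a1 b1 a2 b2 : 'I_m -> R) :
  (forall k, a1 k <= b1 k)%R -> (forall k, a2 k <= b2 k)%R ->
  boxes_intersect m a1 b1 a2 b2 <-> forall k, (a1 k <= b2 k /\ a2 k <= b1 k)%R.
Proof.
move=> h1 h2; split.
  by case=> x hx k; have := hx k; lra.
move=> h; exists (fun k => Rmax (a1 k) (a2 k)) => k.
have := h k; have := h1 k; have := h2 k.
unfold Rmax; destruct (Rle_dec (a1 k) (a2 k)); lra.
Qed.

Definition Rltb (x y : R) : bool := if Rlt_dec x y then true else false.

Lemma RltbP x y : Rltb x y = true <-> (x < y)%R.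
Proof. by rewrite /Rltb; case: Rlt_dec => h; split. Qed.

Section Rank.
Variables (T : finType) (pt : T -> R).
Definition rk (x : R) : nat := #|[set e | Rltb (pt e) x]|.

Lemma rk_le u v : (pt u <= pt v)%R <-> rk (pt u) <= rk (pt v).
Proof.
split.
  move=> h; apply: subset_leq_card; apply/subsetP => e; rewrite !inE.
  move/RltbP => he; apply/RltbP; lra.
move=> h; destruct (Rle_dec (pt u) (pt v)) as [|hn]; first by [].
exfalso; have hvu : (pt v < pt u)%R by lra.
have : rk (pt v) < rk (pt u).
  apply: proper_card; apply/properP; split.
    apply/subsetP => e; rewrite !inE; move/RltbP => he; apply/RltbP; lra.
  exists v; rewrite !inE; first by apply/RltbP.
  by apply/negP; move/RltbP; lra.
by rewrite ltnNge h.
Qed.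

Lemma rk_lt x : rk x < #|T|.+1.
Proof. by rewrite ltnS /rk max_card. Qed.
End Rank.
Arguments rk {T} pt x.
Arguments rk_le {T} pt u v.
Arguments rk_lt {T} pt x.

Definition goodab m n (E : {set 'I_n * 'I_n})
  (ab : ('I_n -> 'I_m -> R) * ('I_n -> 'I_m -> R)) : Prop :=
  (forall i k, (ab.1 i k < ab.2 i k)%R) /\
  (forall i j : 'I_n, (i, j) \in E <->
     (i <> j /\ boxes_intersect m (ab.1 i) (ab.2 i) (ab.1 j) (ab.2 j))).

Definition wit m n E :=
  epsilon (inhabits ((fun _ _ => 0%R), (fun _ _ => 0%R)) : inhabited (('I_n -> 'I_m -> R) * ('I_n -> 'I_m -> R))) (goodab m n E).

Lemma wit_spec m n E : is_box_graph_b m n E -> goodab m n E (wit m n E).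
Proof.
rewrite /is_box_graph_b; case: excluded_middle_informative => // [[a [b h]]] _.
by apply: epsilon_spec; exists (a, b).
Qed.

Definition ptw m n E (k : 'I_m) (e : 'I_n * bool) : R :=
  if e.2 then (wit m n E).2 e.1 k else (wit m n E).1 e.1 k.

Definition code m n E : {ffun 'I_m * ('I_n * bool) -> 'I_(#|{: 'I_n * bool}|).+1} :=
  [ffun ke => Ordinal (rk_lt (ptw m n E ke.1) (ptw m n E ke.1 ke.2))].

Lemma code_inj m n : {in [set E | is_box_graph_b m n E] &, injective (code m n)}.
Proof.
move=> E1 E2; rewrite !inE => h1 h2 hc.
have key : forall E, is_box_graph_b m n E -> forall i j, (i, j) \in E <->
   (i <> j /\ forall k, rk (ptw m n E k) (ptw m n E k (i, false)) <= rk (ptw m n E k) (ptw m n E k (j, true))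
                     /\ rk (ptw m n E k) (ptw m n E k (j, false)) <= rk (ptw m n E k) (ptw m n E k (i, true))).
  move=> E hE i j; have [hlt hE'] := @wit_spec m n E hE.
  rewrite hE' box_int_iff; last 2 first.
    by move=> k; apply: Rlt_le; apply: hlt.
    by move=> k; apply: Rlt_le; apply: hlt.
  split; case=> hij h; split=> // k; have := h k; rewrite -!rk_le /ptw /=; by [].
have hr : forall k e, rk (ptw m n E1 k) (ptw m n E1 k e) = rk (ptw m n E2 k) (ptw m n E2 k e).
  move=> k e; have := congr1 (fun f : {ffun _ -> _} => nat_of_ord (f (k, e))) hc; by rewrite !ffunE.
apply/setP => [[i j]]; apply/idP/idP.
  move/(key _ h1) => [hij hk]; apply/(key _ h2); split=> // k; by rewrite -!hr.
move/(key _ h2) => [hij hk]; apply/(key _ h1); split=> // k; by rewrite !hr.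
Qed.

Lemma upper m n : num_box_graphs m n <= expn (n * 2).+1 (m * (n * 2)).
Proof.
have := @leq_card_in _ _ _ _ (@code_inj m n).
by rewrite /num_box_graphs card_ffun !card_prod !card_ord card_bool.
Qed.


Definition Pb (P : Prop) : bool := if excluded_middle_informative P then true else false.
Lemma PbP P : Pb P = true <-> P.
Proof. by rewrite /Pb; case: excluded_middle_informative => h; split. Qed.

Lemma INR_le_iff a b : (INR a <= INR b)%R <-> a <= b.
Proof. split=> h; [apply/leP; exact: INR_le | apply: le_INR; exact/leP]. Qed.
Lemma INR_lt_iff a b : (INR a < INR b)%R <-> a < b.
Proof. split=> h; [apply/ltP; exact: INR_lt | apply: lt_INR; exact/ltP]. Qed.

Lemma split_l m n (j : 'I_m) : fintype.split (lshift n j) = inl j.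
Proof. exact: (unsplitK (inl j)). Qed.
Lemma split_r m n (j : 'I_n) : fintype.split (rshift m j) = inr j.
Proof. exact: (unsplitK (inr j)). Qed.

Section Lower.
Variables (m s r : nat).
Notation NN := (m * (s * 2) + r).
Notation CT := {ffun 'I_r -> {ffun 'I_m -> 'I_s * 'I_s}}.

Definition la (c : CT) (y : 'I_NN) (k : 'I_m) : R :=
  match fintype.split y with
  | inl u => if u %/ (s * 2) == k then INR (2 * (u %% (s * 2))) else (-1)%R
  | inr f => INR (2 * (c f k).1)
  end.
Definition lb (c : CT) (y : 'I_NN) (k : 'I_m) : R :=
  match fintype.split y with
  | inl u => if u %/ (s * 2) == k then INR (2 * (u %% (s * 2)) + 1) else INR (4 * s + 2)
  | inr f => INR (2 * (s + (c f k).2) + 1)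
  end.

Lemma lab c y k : (la c y k < lb c y k)%R.
Proof.
rewrite /la /lb; case: fintype.split => [u|f].
  case: eqP => _; first by apply/INR_lt_iff; lia.
  have := pos_INR (4 * s + 2); lra.
have := ltn_ord (c f k).1; move=> ?; apply/INR_lt_iff; lia.
Qed.

Definition Phi (c : CT) : {set 'I_NN * 'I_NN} :=
  [set ij | (ij.1 != ij.2) &&
     Pb (boxes_intersect m (la c ij.1) (lb c ij.1) (la c ij.2) (lb c ij.2))].

Lemma Phi_box c : is_box_graph_b m NN (Phi c).
Proof.
rewrite /is_box_graph_b; case: excluded_middle_informative => // hn; exfalso; apply: hn.
exists (la c), (lb c); split; first exact: lab.
move=> i j; rewrite inE /=; split.
  by case/andP => /eqP h /PbP.
by case=> h hb; apply/andP; split; [apply/eqP | apply/PbP].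
Qed.

Lemma Phi_mem c (f : 'I_r) (k : 'I_m) j (hj : j < s * 2) (hu : k * (s * 2) + j < m * (s * 2)) :
  ((rshift (m * (s * 2)) f, lshift r (Ordinal hu)) \in Phi c) =
  ((c f k).1 <= j) && (j <= s + (c f k).2).
Proof.
have hs : 0 < s * 2 by lia.
have hd : (k * (s * 2) + j) %/ (s * 2) = k by rewrite divnMDl // divn_small ?addn0.
have hm : (k * (s * 2) + j) %% (s * 2) = j by rewrite modnMDl modn_small.
rewrite inE /=.
have -> : (rshift (m * (s * 2)) f != lshift r (Ordinal hu)).
  apply/eqP => /(congr1 val) /=; lia.
rewrite /=.
apply/idP/idP.
  move/PbP; rewrite box_int_iff; last 2 first.
    by move=> k'; apply: Rlt_le; apply: lab.
    by move=> k'; apply: Rlt_le; apply: lab.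
  move=> /(_ k); rewrite /la /lb split_l split_r /= hd eqxx hm.
  case=> /INR_le_iff h1 /INR_le_iff h2; apply/andP; split; lia.
case/andP => h1 h2; apply/PbP; rewrite box_int_iff; last 2 first.
  by move=> k'; apply: Rlt_le; apply: lab.
  by move=> k'; apply: Rlt_le; apply: lab.
move=> k'; rewrite /la /lb split_l split_r /= hd hm.
case: eqP => [/val_inj e|_]; first subst k'.
  by split; apply/INR_le_iff; lia.
split; first by have := ltn_ord (c f k').1; move=> ?; apply/INR_le_iff; lia.
have := pos_INR (2 * (s + (c f k').2) + 1); lra.
Qed.

Lemma Phi_inj : injective Phi.
Proof.
move=> c c' hc; apply/ffunP => f; apply/ffunP => k.
have hk := ltn_ord k.
have H : forall j, j < s * 2 ->
    ((c f k).1 <= j) && (j <= s + (c f k).2) = ((c' f k).1 <= j) && (j <= s + (c' f k).2).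
  move=> j hj.
  have hu : k * (s * 2) + j < m * (s * 2).
    have : k.+1 * (s * 2) <= m * (s * 2) by rewrite leq_mul2r hk orbT.
    rewrite mulSn; lia.
  by rewrite -(@Phi_mem c f k j hj hu) hc Phi_mem.
case: (c f k) H => p q; case: (c' f k) => p' q' /= H.
have hp := ltn_ord p; have hq := ltn_ord q; have hp' := ltn_ord p'; have hq' := ltn_ord q'.
have e1 := H p ltac:(lia); have e2 := H p' ltac:(lia).
have e3 := H (s + q) ltac:(lia); have e4 := H (s + q') ltac:(lia).
have ep : p = p' :> nat.
  move: e1 e2; lia.
have eq : q = q' :> nat.
  move: e3 e4; lia.
by congr pair; apply: val_inj.
Qed.

Lemma lower : expn (expn (s * s) m) r <= num_box_graphs m NN.
Proof.
have -> : expn (expn (s * s) m) r = #|Phi @: [set: CT]|.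
  rewrite card_imset; last exact: Phi_inj.
  by rewrite cardsT card_ffun card_ffun card_prod !card_ord.
apply: subset_leq_card; apply/subsetP => E /imsetP [c _ ->].
by rewrite inE Phi_box.
Qed.
End Lower.

Lemma complete_box m n : 0 < num_box_graphs m n.
Proof.
rewrite /num_box_graphs card_gt0; apply/set0Pn.
exists [set ij : 'I_n * 'I_n | ij.1 != ij.2]; rewrite inE.
rewrite /is_box_graph_b; case: excluded_middle_informative => // hn; exfalso; apply: hn.
exists (fun _ _ => 0%R), (fun _ _ => 1%R); split; first by move=> *; lra.
move=> i j; rewrite inE /=; split.
  move/eqP => h; split=> //; exists (fun _ => 0%R) => k; lra.
by case=> /eqP h _.
Qed.

Lemma INR_muln a b : INR (a * b) = (INR a * INR b)%R.
Proof. exact: mult_INR. Qed.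
Lemma INR_addn a b : INR (a + b) = (INR a + INR b)%R.
Proof. exact: plus_INR. Qed.
Lemma INR_expn a b : INR (expn a b) = (INR a ^ b)%R.
Proof. elim: b => [|b IH]; first by rewrite expn0. by rewrite expnS INR_muln IH. Qed.

Lemma ln_le' x y : (0 < x)%R -> (x <= y)%R -> (ln x <= ln y)%R.
Proof.
move=> hx hxy; case: (Rle_lt_or_eq_dec _ _ hxy) => h.
  by apply: Rlt_le; apply: ln_increasing.
by rewrite h; apply: Rle_refl.
Qed.

Lemma NBpos m n : (0 < INR (num_box_graphs m n))%R.
Proof. apply: lt_0_INR; apply/ltP; exact: complete_box. Qed.

Lemma upper_real m n : 1 <= n ->
  (ln (INR (num_box_graphs m n)) <= 2 * INR m * INR n * (ln (INR n) + ln 3))%R.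
Proof.
move=> hn.
have hn' : (1 <= INR n)%R by change 1%R with (INR 1); apply/INR_le_iff.
have h1 : (INR (num_box_graphs m n) <= INR (n * 2).+1 ^ (m * (n * 2)))%R.
  by rewrite -INR_expn; apply/INR_le_iff; apply: upper.
have h2 : (INR (n * 2).+1 <= INR n * 3)%R.
  rewrite S_INR INR_muln /=; lra.
apply: (Rle_trans _ _ _ (ln_le' _ _ (NBpos m n) h1)).
rewrite ln_pow; last by apply: lt_0_INR; apply/ltP.
rewrite INR_muln INR_muln /=.
have : (ln (INR (n * 2).+1) <= ln (INR n) + ln 3)%R.
  rewrite -ln_mult; try lra.
  apply: ln_le' => //; apply: lt_0_INR; apply/ltP; lia.
have := pos_INR m; have := pos_INR n => hp hm hl.
have e : (INR m * (INR n * (1 + 1)) * ln (INR (n * 2).+1) =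
          2 * INR m * INR n * ln (INR (n * 2).+1))%R by ring.
rewrite e; apply: Rmult_le_compat_l => //.
apply: Rmult_le_pos => //; apply: Rmult_le_pos => //; lra.
Qed.

Lemma lower_real m n t : 1 <= m -> 1 <= t -> 4 * m * t <= n ->
  (2 * INR m * INR n * (1 - / INR t) * (ln (INR n) - ln (INR (4 * m * t)))
     <= ln (INR (num_box_graphs m n)))%R.
Proof.
move=> hm ht hn.
set d := m * t * 2.
have hd : 0 < d by rewrite /d; lia.
set s := n %/ d.
have h1 : s * d <= n by apply: leq_divM.
have h2 : n < s.+1 * d by apply: ltn_ceil.
have hmr : m * (s * 2) * t <= n by move: h1; rewrite /d; nia.
have hmr' : m * (s * 2) <= n by nia.
have hs4 : n <= s * (4 * m * t) by move: h1 h2; rewrite /d; nia.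
have hs1 : 1 <= s by nia.
set r := n - m * (s * 2).
have hnr : n = m * (s * 2) + r by rewrite /r; lia.
have hlow := lower m s r.
rewrite -hnr in hlow.
have Rt : (1 <= INR t)%R by change 1%R with (INR 1); apply/INR_le_iff.
have Rs : (1 <= INR s)%R by change 1%R with (INR 1); apply/INR_le_iff.
have Rm : (1 <= INR m)%R by change 1%R with (INR 1); apply/INR_le_iff.
have RK : (1 <= INR (4 * m * t))%R by change 1%R with (INR 1); apply/INR_le_iff; nia.
have RnK : (INR (4 * m * t) <= INR n)%R by apply/INR_le_iff.
have Rr : (INR n * (INR t - 1) <= INR r * INR t)%R.
  have e : INR n = (INR (m * (s * 2)) + INR r)%R by rewrite -INR_addn -hnr.
  have : (INR (m * (s * 2)) * INR t <= INR n)%R by rewrite -INR_muln; apply/INR_le_iff.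
  rewrite {2}e; nra.
have Rsn : (INR n <= INR s * INR (4 * m * t))%R by rewrite -INR_muln; apply/INR_le_iff.
have hls : (ln (INR n) - ln (INR (4 * m * t)) <= ln (INR s))%R.
  have : (ln (INR n) <= ln (INR s) + ln (INR (4 * m * t)))%R.
    rewrite -ln_mult; try lra. apply: ln_le' => //; lra.
  lra.
have hLC : (0 <= ln (INR n) - ln (INR (4 * m * t)))%R.
  have h0 : (0 < INR (4 * m * t))%R by lra.
  have := ln_le' _ _ h0 RnK; lra.
have hlnN : (INR r * (INR m * (ln (INR s) + ln (INR s))) <= ln (INR (num_box_graphs m n)))%R.
  have hp : (0 < INR (expn (expn (s * s) m) r))%R.
    apply: lt_0_INR; apply/ltP; rewrite !expn_gt0 muln_gt0; lia.
  have hle : (INR (expn (expn (s * s) m) r) <= INR (num_box_graphs m n))%R by apply/INR_le_iff.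
  have := ln_le' _ _ hp hle.
  rewrite INR_expn INR_expn INR_muln ln_pow; last by apply: pow_lt; nra.
  rewrite ln_pow; last by nra.
  by rewrite ln_mult; try lra.
apply: Rle_trans hlnN.
have hr0 : (INR n * (1 - / INR t) <= INR r)%R.
  have e : (INR n * (1 - / INR t) = INR n * (INR t - 1) * / INR t)%R by field; lra.
  rewrite e; apply: (Rmult_le_reg_r (INR t)); first lra.
  rewrite Rmult_assoc Rinv_l; lra.
have hit : (0 <= 1 - / INR t)%R.
  have : (/ INR t <= 1)%R by rewrite -Rinv_1; apply: Rinv_le_contravar; lra.
  lra.
have hn0 : (0 <= INR n)%R by apply: pos_INR.
have e : (2 * INR m * INR n * (1 - / INR t) * (ln (INR n) - ln (INR (4 * m * t)))
   = INR m * 2 * ((INR n * (1 - / INR t)) * (ln (INR n) - ln (INR (4 * m * t)))))%R by ring.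
have e2 : (INR r * (INR m * (ln (INR s) + ln (INR s))) = INR m * 2 * (INR r * ln (INR s)))%R by ring.
rewrite e e2; apply: Rmult_le_compat_l; first lra.
apply: Rmult_le_compat => //.
apply: Rmult_le_pos => //.
Qed.

Definition epsf m n : R :=
  if 2 <= n then (ln (INR (num_box_graphs m n)) / (INR n * ln (INR n)) - 2 * INR m)%R
  else 0%R.

Lemma lnn_pos n : 2 <= n -> (0 < ln (INR n))%R.
Proof.
move=> hn; rewrite -ln_1; apply: ln_increasing; first lra.
change 1%R with (INR 1); apply/INR_lt_iff; lia.
Qed.

Theorem corollary2p8 (m : nat) (hm : (1 <= m)%nat) :
  exists eps : nat -> R, Un_cv eps 0%R /\
    forall n : nat, (2 <= n)%nat ->
      INR (num_box_graphs m n) = Rpower (INR n) ((2 * INR m + eps n) * INR n).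
Proof.
exists (epsf m); split; last first.
  move=> n hn; rewrite /Rpower /epsf hn.
  have hL := @lnn_pos n hn.
  have hn0 : (0 < INR n)%R by apply: lt_0_INR; apply/ltP; lia.
  have -> : ((2 * INR m + (ln (INR (num_box_graphs m n)) / (INR n * ln (INR n)) - 2 * INR m)) *
     INR n * ln (INR n) = ln (INR (num_box_graphs m n)))%R by field; lra.
  by rewrite exp_ln //; apply: NBpos.
move=> e he.
have Rm : (1 <= INR m)%R by change 1%R with (INR 1); apply/INR_le_iff.
have [t ht] := INR_unbounded (4 * INR m / e).
have ht' : (4 * INR m < e * INR t)%R.
  have : (4 * INR m / e * e < INR t * e)%R by apply: Rmult_lt_compat_r.
  have -> : (4 * INR m / e * e = 4 * INR m)%R by field; lra.
  lra.
have t1 : 1 <= t.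
  case: t ht ht' => // _; rewrite /= Rmult_0_r; lra.
have Rt : (1 <= INR t)%R by change 1%R with (INR 1); apply/INR_le_iff.
set C := ln (INR (4 * m * t)).
have C0 : (0 <= C)%R.
  rewrite /C -ln_1; apply: ln_le'; first lra.
  change 1%R with (INR 1); apply/INR_le_iff; nia.
have l3 : (0 <= ln 3)%R by rewrite -ln_1; apply: ln_le'; lra.
set B := ((4 * INR m * C + 2 * INR m * ln 3) / e + 1)%R.
have [n1 hn1] := INR_unbounded (exp B).
exists (maxn n1 (4 * m * t + 2)) => n /leP hn.
rewrite /R_dist Rminus_0_r.
have n2 : 2 <= n by move: hn; rewrite geq_max; lia.
have nK : 4 * m * t <= n by move: hn; rewrite geq_max; lia.
have nn1 : (exp B < INR n)%R.
  apply: (Rlt_le_trans _ _ _ hn1); apply/INR_le_iff; move: hn; rewrite geq_max; lia.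
have LB : (B < ln (INR n))%R.
  by rewrite -(ln_exp B); apply: ln_increasing => //; apply: exp_pos.
set L := ln (INR n) in LB *.
have hL : (0 < L)%R by exact: (@lnn_pos n n2).
have eL : (4 * INR m * C + 2 * INR m * ln 3 < e * L)%R.
  have : (e * B < e * L)%R by apply: Rmult_lt_compat_l.
  have -> : (e * B = 4 * INR m * C + 2 * INR m * ln 3 + e)%R by rewrite /B; field; lra.
  lra.
have hn0 : (0 < INR n)%R by apply: lt_0_INR; apply/ltP; lia.
rewrite /epsf n2.
set X := (ln (INR (num_box_graphs m n)) / (INR n * L))%R.
have eX : ln (INR (num_box_graphs m n)) = (X * (INR n * L))%R by rewrite /X; field; lra.
have hup := @upper_real m n (ltnW n2).
have hlo := @lower_real m n t hm t1 nK.
rewrite -/C -/L eX in hup hlo.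
have hnL : (0 < INR n * L)%R by apply: Rmult_lt_0_compat.
apply: Rabs_def1.
  suff : (X * (INR n * L) < (2 * INR m + e) * (INR n * L))%R.
    by move/(Rmult_lt_reg_r _ _ _ hnL); lra.
  apply: (Rle_lt_trans _ _ _ hup).
  have hmC : (0 <= INR m * C)%R by apply: Rmult_le_pos; lra.
  have : (2 * INR m * ln 3 < e * L)%R by lra.
  move=> h; have := Rmult_lt_compat_l _ _ _ hn0 h; nra.
suff : ((2 * INR m - e) * (INR n * L) < X * (INR n * L))%R.
  by move/(Rmult_lt_reg_r _ _ _ hnL); lra.
apply: (Rlt_le_trans _ _ _ _ hlo).
set u := (/ INR t)%R.
have hu : (u * INR t = 1)%R by rewrite /u Rinv_l; lra.
have u0 : (0 < u)%R by rewrite /u; apply: Rinv_0_lt_compat; lra.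
have u1 : (u <= 1)%R by nra.
have h2m : (4 * INR m * u < e)%R by nra.
have hLC : (C <= L)%R.
  rewrite /C /L; apply: ln_le'; first by apply: lt_0_INR; apply/ltP; nia.
  by apply/INR_le_iff.
have k1 : (2 * INR m * u * L < e * L / 2)%R by nra.
have k2 : (2 * INR m * C < e * L / 2)%R by nra.
have muC : (0 <= INR m * u * C)%R.
  apply: Rmult_le_pos; last lra. apply: Rmult_le_pos; lra.
have k3 : (2 * INR m * (1 - u) * (L - C) >= 2 * INR m * L - 2 * INR m * u * L - 2 * INR m * C)%R by nra.
have k4 : ((2 * INR m - e) * L < 2 * INR m * (1 - u) * (L - C))%R by lra.
have := Rmult_lt_compat_l _ _ _ hn0 k4; nra.
Qed.
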